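(* Let $F$ be a field, $A\in\mathrm{gl}(m,F)$, $\rho$ a permutation of $\Omega_n$, and $\pi$ a permutation of $\Omega_{mn}$ such that $\operatorname{supp}P_\pi\subseteq\operatorname{supp}(A\,\dot\times\,P_\rho)$. Then there exist permutations $\lambda_0,\dots,\lambda_{n-1}$ of $\Omega_m$ such that $\pi(jn+s)=\lambda_s(j)\,n+\rho(s)$ for all $j\in\Omega_m$, $s\in\Omega_n$, and $\operatorname{supp}P_{\lambda_s}\subseteq\operatorname{supp}A$ for all $s\in\Omega_n$.
   Context: $\Omega_n=\{0,1,\dots,n-1\}$ indexes rows and columns; $\mathrm{gl}(m,F)$ is the space of $m\times m$ matrices over $F$. For a permutation $\pi$ of $\Omega_n$, $P_\pi$ is the matrix with $(i,j)$ entry $1$ if $i=\pi(j)$ and $0$ otherwise. For $A=[a_{i,j}]$, $\operatorname{supp}A=\{(i,j): a_{i,j}\neq 0\}$. For $A=[a_{i,j}]_{i,j\in\Omega_m}$ and $B=[b_{r,s}]_{r,s\in\Omega_n}$, the Kronecker product $A\,\dot\times\,B$ is the $mn\times mn$ matrix whose $(in+r,\,jn+s)$ entry is $a_{i,j}b_{r,s}$. *)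

(* Defs.v *)
From mathcomp Require Import all_boot all_order all_fingroup all_algebra.
Set Implicit Arguments. Unset Strict Implicit. Unset Printing Implicit Defensive.
Import GRing.Theory.
Local Open Scope ring_scope.

Lemma kdiv_lt m n (k : 'I_(m * n)) : (k %/ n < m)%N.
Proof. by rewrite ltn_divLR ?(mulnC m) //; case: n k => [|n] k;
  [case: k; rewrite muln0 | ]. Qed.
Lemma kmod_lt m n (k : 'I_(m * n)) : (k %% n < n)%N.
Proof. by rewrite ltn_mod; case: n k => [|n] [k] //=; rewrite muln0. Qed.

Definition kdiv m n (k : 'I_(m * n)) : 'I_m := Ordinal (kdiv_lt k).
Definition kmod m n (k : 'I_(m * n)) : 'I_n := Ordinal (kmod_lt k).

(* The Kronecker product A \dot\times B : (i*n+r, j*n+s) entry is a_{i,j} b_{r,s}. *)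
Definition kron (F : pzRingType) m n (A : 'M[F]_m) (B : 'M[F]_n) : 'M[F]_(m * n) :=
  \matrix_(k, l) (A (kdiv k) (kdiv l) * B (kmod k) (kmod l)).

Definition pmat (F : pzRingType) n (pi : {perm 'I_n}) : 'M[F]_n :=
  \matrix_(i, j) (if i == pi j then 1 else 0).

Definition supp (F : pzRingType) m (A : 'M[F]_m) : {set 'I_m * 'I_m} :=
  [set ij | A ij.1 ij.2 != 0].

Lemma kidx_lt m n (j : 'I_m) (s : 'I_n) : (j * n + s < m * n)%N.
Proof.
case: j s => j hj [s hs] /=.
have : (j * n + s < j * n + n)%N by rewrite ltn_add2l.
move/leq_trans; apply; by rewrite -mulSnr leq_mul2r hj orbT.
Qed.
Definition kidx m n (j : 'I_m) (s : 'I_n) : 'I_(m * n) := Ordinal (kidx_lt j s).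

(* Main.v *)
Require Import Defs.
From mathcomp Require Import all_boot all_order all_fingroup all_algebra.
Import GRing.Theory.
Local Open Scope ring_scope.

Lemma kdiv_kidx m n (j : 'I_m) (s : 'I_n) : kdiv (kidx j s) = j.
Proof.
apply: val_inj => /=; have n0 : (0 < n)%N by case: s => s /=; case: n => // -[].
by rewrite divnMDl // divn_small ?addn0 ?ltn_ord.
Qed.

Lemma kmod_kidx m n (j : 'I_m) (s : 'I_n) : kmod (kidx j s) = s.
Proof. by apply: val_inj => /=; rewrite modnMDl modn_small ?ltn_ord. Qed.

Arguments kdiv_kidx {m n}.
Arguments kmod_kidx {m n}.

Lemma k_eq m n (k k' : 'I_(m * n)) : kdiv k = kdiv k' -> kmod k = kmod k' -> k = k'.
Proof.
move=> /(congr1 val) /= h1 /(congr1 val) /= h2; apply: val_inj => /=.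
by rewrite (divn_eq k n) (divn_eq k' n) h1 h2.
Qed.

Theorem theorem3p3 (F : fieldType) (m n : nat) (A : 'M[F]_m)
  (rho : {perm 'I_n}) (pi : {perm 'I_(m * n)}) :
  supp (pmat F pi) \subset supp (kron A (pmat F rho)) ->
  exists lambda : 'I_n -> {perm 'I_m},
    (forall (j : 'I_m) (s : 'I_n),
        val (pi (kidx j s)) = (val (lambda s j) * n + val (rho s))%N) /\
    (forall s : 'I_n, supp (pmat F (lambda s)) \subset supp A).
Proof.
move=> H.
have key : forall l, kmod (pi l) = rho (kmod l) /\ A (kdiv (pi l)) (kdiv l) != 0.
  move=> l.
  have : (pi l, l) \in supp (pmat F pi) by rewrite inE /= mxE eqxx oner_neq0.
  move/(subsetP H); rewrite inE /= mxE /= mxE.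
  case: (kmod (pi l) =P rho (kmod l)) => [e | _]; last by rewrite mulr0 eqxx.
  by rewrite mulr1.
have inj : forall s, injective (fun j : 'I_m => kdiv (pi (kidx j s))).
  move=> s j j' e.
  have e2 : kmod (pi (kidx j s)) = kmod (pi (kidx j' s)).
    by rewrite !(proj1 (key _)) !kmod_kidx.
  have := @k_eq m n _ _ e e2 => /perm_inj e3.
  by rewrite -(kdiv_kidx j s) e3 kdiv_kidx.
exists (fun s => perm (inj s)); split.
  move=> j s; rewrite permE.
  rewrite [LHS](divn_eq _ n); congr (_ + _)%N.
  by have := proj1 (key (kidx j s)); rewrite kmod_kidx => /(congr1 val).
move=> s; apply/subsetP => -[i j]; rewrite !inE /= mxE permE.
case: (i =P kdiv (pi (kidx j s))) => [-> _ | _]; last by rewrite eqxx.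
by have := proj2 (key (kidx j s)); rewrite kdiv_kidx.
Qed.
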